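(* Let $\Omega\subset\{1,\dots,N\}$ have cardinality $n$, let $0<\epsilon<1$, $\delta>0$, $s\in\mathbb{N}$, and let $b\in\mathbb{R}^N$, $c\in\mathbb{R}^{2N-1}$ be random vectors with independent Bernoulli $\pm1$ entries. Let $\delta_s$ denote the restricted isometry constant of order $s$ of either $\frac1{\sqrt n}S^b_\Omega$ or $\frac1{\sqrt n}T^c_\Omega$. Assume $$ n\ge 16\,\delta^{-2}s^2\log^2(2N^2/\epsilon).$$ Then with probability at least $1-\epsilon$ it holds $\delta_s\le\delta$.
   Context: For $b=(b_0,\dots,b_{N-1})\in\mathbb{R}^N$ the circulant matrix $S^b\in\mathbb{R}^{N\times N}$ has entries $S^b_{i,j}=b_{(j-i)\bmod N}$, $i,j=1,\dots,N$. For $c=(c_{-N+1},\dots,c_{N-1})\in\mathbb{R}^{2N-1}$ the Toeplitz matrix $T^c\in\mathbb{R}^{N\times N}$ has entries $T^c_{i,j}=c_{j-i}$. $S^b_\Omega$ (resp. $T^c_\Omega$) is the submatrix consisting of the rows indexed by $\Omega$. A Bernoulli $\pm1$ variable takes values $\pm1$ with probability $1/2$ each. The restricted isometry constant $\delta_s$ of a matrix $A$ is the smallest $\delta\ge0$ such that $(1-\delta)\|x\|_2^2\le\|Ax\|_2^2\le(1+\delta)\|x\|_2^2$ for all $x$ with at most $s$ non-zero entries. *)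

(* Defs.v *)
From HB Require Import structures.
From mathcomp Require Import all_boot all_order all_algebra.
From mathcomp Require Import all_classical all_reals all_analysis.
Set Implicit Arguments. Unset Strict Implicit. Unset Printing Implicit Defensive.
Import Order.TTheory GRing.Theory Num.Theory.
Local Open Scope ring_scope.
Local Open Scope classical_set_scope.

Definition pm1 (R : pzRingType) (b : bool) : R := if b then 1 else -1.

(* Circulant matrix S^b : entries b_{(j-i) mod N}; indices 0..N-1. *)
Definition circulant (R : pzRingType) (N : nat) (b : {ffun 'I_N -> bool}) : 'M[R]_N :=
  \matrix_(i < N, j < N)
    (if insub ((j + N - i) %% N)%N is Some k then pm1 R (b k) else 0).

(* Toeplitz matrix T^c : entries c_{j-i}, with c_{-N+1..N-1} stored at
   positions 0..2N-2, i.e. c_k is stored at index k + N - 1. *)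
Definition toeplitz (R : pzRingType) (N : nat) (c : {ffun 'I_(2 * N).-1 -> bool}) : 'M[R]_N :=
  \matrix_(i < N, j < N)
    (if insub (j + N.-1 - i)%N is Some k then pm1 R (c k) else 0).

Definition rowsubset (R : Type) (N : nat) (Om : {set 'I_N}) (A : 'M[R]_N)
  : 'M[R]_(#|Om|, N) := \matrix_(i < #|Om|, j < N) A (enum_val i) j.

Definition sqnorm (R : pzRingType) (m : nat) (x : 'cV[R]_m) : R := \sum_i (x i ord0) ^+ 2.

Definition sparse (R : pzRingType) (N s : nat) (x : 'cV[R]_N) : bool :=
  (#|[set j | x j ord0 != 0%R]| <= s)%N.

Definition rip_set (R : realType) (m N s : nat) (A : 'M[R]_(m, N)) : set R :=
  [set d | 0 <= d /\ forall x : 'cV[R]_N, sparse s x ->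
      (1 - d) * sqnorm x <= sqnorm (A *m x) /\ sqnorm (A *m x) <= (1 + d) * sqnorm x].

Definition ric (R : realType) (m N s : nat) (A : 'M[R]_(m, N)) : R := inf (rip_set s A).

(* Probability of an event on independent uniform Bernoulli vectors. *)
Definition prob (R : realType) (M : nat) (E : pred {ffun 'I_M -> bool}) : R :=
  #|[set b | E b]|%:R / (2 ^ M)%:R.

(* Main.v *)
Require Import Defs.
From HB Require Import structures.
From mathcomp Require Import all_boot all_order all_algebra.
From mathcomp Require Import all_classical all_reals all_analysis.
From mathcomp.algebra_tactics Require Import ring lra.
From mathcomp Require Import zify.
From Stdlib Require Import Lia.
Set Implicit Arguments. Unset Strict Implicit. Unset Printing Implicit Defensive.
Import Order.TTheory GRing.Theory Num.Theory.
Local Open Scope ring_scope.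


Section A.
Variable R : realType.

Lemma cosh_le (l : R) : `|l| <= 1/4 ->
  expR l + expR (-l) <= 2 * expR (16/15 * l^+2).
Proof.
move=> hl.
have hl1 : - (1/4) <= l <= 1/4 by rewrite -ler_norml.
case/andP: hl1 => hl1 hl2.
have ha := expR_gt0 l; have hb := expR_gt0 (-l).
have hab : expR l * expR (-l) = 1 by rewrite expRN mulfV // gt_eqF.
have h1 := expR_ge1Dx (-l); have h2 := expR_ge1Dx l.
have h3 := expR_ge1Dx (16/15 * l^+2).
have e1 : expR l * (1 - l) <= 1.
  by rewrite -hab ler_pM2l //; lra.
have e2 : expR (-l) * (1 + l) <= 1.
  by rewrite -hab mulrC ler_pM2r //; lra.
nra.
Qed.

Lemma ln_ge95 (x : R) : 8 <= x -> 9/5 <= ln x.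
Proof.
move=> hx.
have h1 := expR_ge1Dx (-(1/5) : R).
have hb := expR_gt0 (1/5 : R).
have hab : expR (1/5 : R) * expR (-(1/5)) = 1 by rewrite expRN mulfV // gt_eqF.
have e1 : expR (1/5 : R) <= 5/4 by nra.
have e9 : expR (9/5 : R) = expR (1/5) ^+ 9.
  by rewrite -expRM_natl; congr expR; lra.
have e2 : expR (1/5 : R) ^+ 3 <= 2.
  rewrite !exprS expr0 mulr1.
  have hy : 0 <= expR (1/5 : R) by apply: ltW.
  have hy2 : expR (1/5 : R) * expR (1/5) <= 25/16.
    by apply: le_trans (ler_pM hy hy e1 e1) _; lra.
  apply: le_trans (ler_pM hy (mulr_ge0 hy hy) e1 hy2) _; lra.
have e3 : expR (1/5 : R) ^+ 9 <= 8.
  rewrite (_ : 9%N = (3 * 3)%N) // exprM.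
  apply: le_trans (lerXn2r _ _ _ e2) _; rewrite ?nnegrE ?exprn_ge0 //; try exact: ltW.
  by rewrite !exprS expr0; lra.
rewrite -[9/5 : R]expRK ler_ln ?posrE ?expR_gt0 //; last by lra.
by rewrite e9; exact: le_trans e3 hx.
Qed.
End A.

Definition getp (R : pzRingType) (M : nat) (y : {ffun 'I_M -> bool}) (m : nat) : R :=
  if insub m is Some k then pm1 R (y k) else 0.

Definition phi (M d : nat) (y : {ffun 'I_M -> bool}) : {ffun 'I_M -> bool} :=
  [ffun m : 'I_M => if (insub (m + d)%N : option 'I_M) is Some m' then y m == y m' else y m].

Section B.
Variable R : realType.

Lemma getp_ord M (y : {ffun 'I_M -> bool}) (m : 'I_M) : getp R y m = pm1 R (y m).
Proof.
rewrite /getp; case: insubP => [k _ /val_inj -> //|]; by rewrite ltn_ord.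
Qed.

Lemma pm1_eq (a b : bool) : pm1 R (a == b) = pm1 R a * pm1 R b.
Proof. by case: a; case: b; rewrite /pm1 /= ?mulr1 ?mul1r ?mulrNN ?mulr1. Qed.

Lemma phi_get M d (y : {ffun 'I_M -> bool}) (m : 'I_M) : (m + d < M)%N ->
  getp R y m * getp R y (m + d) = pm1 R (phi d y m).
Proof.
move=> h; rewrite getp_ord /getp ffunE.
case: insubP => [k _ _|]; last by rewrite h.
by rewrite pm1_eq.
Qed.

Lemma phi_inj M d : (0 < d)%N -> injective (@phi M d).
Proof.
move=> hd y1 y2 e; apply/ffunP.
suff H : forall k (m : 'I_M), (M - k <= m)%N -> y1 m = y2 m.
  by move=> m; apply: (H M); rewrite subnn.
elim=> [|k IH] m hm.
  by have := ltn_ord m; lia.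
have := congr1 (fun f : {ffun _ -> bool} => f m) e; rewrite !ffunE.
case: insubP => [m' _ hv|] //.
have -> : y1 m' = y2 m' by apply: IH; rewrite hv; lia.
by case: (y1 m); case: (y2 m); case: (y2 m').
Qed.

Lemma mgf M (A : {set 'I_M}) (l : R) : `|l| <= 1/4 ->
  \sum_(z : {ffun 'I_M -> bool}) expR (l * \sum_(m in A) pm1 R (z m))
  <= 2 ^+ M * expR (16/15 * l^+2 * #|A|%:R).
Proof.
move=> hl.
have -> : \sum_(z : {ffun 'I_M -> bool}) expR (l * \sum_(m in A) pm1 R (z m))
  = \prod_(m : 'I_M) \sum_(b : bool) (if m \in A then expR (l * pm1 R b) else 1).
  rewrite bigA_distr_bigA /=; apply: eq_bigr => z _.
  by rewrite mulr_sumr expR_sum big_mkcond.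
apply: (@le_trans _ _ (\prod_(m : 'I_M) (2 * expR (16/15 * l^+2 * (m \in A)%:R)))).
  apply: ler_prod => m _; rewrite big_bool /=.
  case: (m \in A) => /=.
    rewrite /pm1 mulr1 mulrN1 mulr1.
    have := expR_gt0 l; have := expR_gt0 (- l); have := cosh_le hl; lra.
  rewrite mulr0 expR0 mulr1; lra.
rewrite big_split /= prodr_const card_ord -expR_sum -mulr_sumr.
have -> : \sum_(m < M) (m \in A)%:R = #|A|%:R :> R.
  rewrite -sum1_card natr_sum [RHS]big_mkcond /=.
  by apply: eq_bigr => m _; case: (m \in A).
by [].
Qed.

Lemma tail M d (A : {set 'I_M}) (n : nat) (L : R) :
  (0 < d)%N -> (forall m, m \in A -> m + d < M)%N -> (#|A| <= n)%N -> 0 < L ->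
  4 * L < Num.sqrt n%:R ->
  #|[set y : {ffun 'I_M -> bool} | 2 * Num.sqrt n%:R * L <
     `| \sum_(m in A) getp R y m * getp R y (m + d) |]|%:R
  <= 2 ^+ M * (2 * expR (- (15/16 * L^+2))).
Proof.
move=> hd hA hn hL hr.
set r := Num.sqrt n%:R in hr *.
have r0 : 0 < r by lra.
have rn : r ^+ 2 = n%:R by rewrite sqr_sqrtr.
set u := 2 * r * L.
set l := 15 * L / (16 * r).
pose T (z : {ffun 'I_M -> bool}) := \sum_(m in A) pm1 R (z m).
have -> : #|[set y : {ffun 'I_M -> bool} | u < `| \sum_(m in A) getp R y m * getp R y (m + d) |]|%:R
   = \sum_(y : {ffun 'I_M -> bool}) ((u < `|T (phi d y)|)%R)%:R :> R.
  rewrite -sum1_card natr_sum big_mkcond /=; apply: eq_bigr => y _.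
  rewrite inE /T; under eq_bigr => m hm do rewrite (phi_get _ (hA m hm)).
  by case: ifP.
have -> : \sum_(y : {ffun 'I_M -> bool}) ((u < `|T (phi d y)|)%R)%:R
   = \sum_(z : {ffun 'I_M -> bool}) ((u < `|T z|)%R)%:R :> R.
  by rewrite [RHS](reindex_inj (@phi_inj M d hd)).
have hl : `|l| <= 1/4.
  rewrite ger0_norm /l; last by apply: divr_ge0; lra.
  rewrite ler_pdivrMr; lra.
apply: (@le_trans _ _ (\sum_z expR (- (l * u)) * (expR (l * T z) + expR ((- l) * T z)))).
  apply: ler_sum => z _.
  have e1 := expR_gt0 (l * T z); have e2 := expR_gt0 (- l * T z).
  case: ltP => h /=; last first.
    by apply: mulr_ge0; [exact: ltW (expR_gt0 _)|lra].
  have l0 : 0 <= l by apply: divr_ge0; lra.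
  have p0 := expR_gt0 (- (l * u)).
  rewrite mulrDr.
  have q1 : 0 <= expR (- (l * u)) * expR (l * T z) by rewrite mulr_ge0 // ltW.
  have q2 : 0 <= expR (- (l * u)) * expR (- l * T z) by rewrite mulr_ge0 // ltW.
  case: (lerP 0 (T z)) => hT.
    rewrite ger0_norm // in h.
    have : 1 <= expR (- (l * u)) * expR (l * T z).
      rewrite -expRD -expR0 ler_expR.
      have : l * u <= l * T z by rewrite ler_wpM2l // ltW.
      lra.
    lra.
  rewrite ltr0_norm // in h.
  have : 1 <= expR (- (l * u)) * expR (- l * T z).
    rewrite -expRD -expR0 ler_expR.
    have : l * u <= l * (- T z) by rewrite ler_wpM2l // ltW.
    rewrite mulNr mulrN; lra.
  lra.
rewrite -mulr_sumr big_split /=.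
have m1 := mgf A hl.
have m2 : \sum_(z : {ffun 'I_M -> bool}) expR (- l * T z)
   <= 2 ^+ M * expR (16/15 * l^+2 * #|A|%:R).
  by rewrite -sqrrN; apply: mgf; rewrite normrN.
have hA' : 16/15 * l^+2 * #|A|%:R <= 16/15 * l^+2 * n%:R.
  by rewrite ler_wpM2l ?ler_nat // mulr_ge0 ?sqr_ge0 //; lra.
have : expR (16/15 * l^+2 * #|A|%:R) <= expR (16/15 * l^+2 * n%:R) by rewrite ler_expR.
have ee : - (l * u) + 16/15 * l^+2 * n%:R = - (15/16 * L^+2).
  rewrite -rn /l /u; field; lra.
have := expR_gt0 (- (l * u)); have := expR_gt0 (16/15 * l^+2 * #|A|%:R).
rewrite -ee expRD => p1 p2 p3.
set E1 := expR (- (l * u)) in p2 *; set E2 := expR (16/15 * l^+2 * n%:R) in p3 *.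
set E3 := expR (16/15 * l^+2 * #|A|%:R) in p1 p3 m1 m2 *.
have p4 : (0 : R) < 2 ^+ M by apply: exprn_gt0.
have p5 : 2 ^+ M * E3 <= 2 ^+ M * E2 by rewrite ler_wpM2l // ltW.
have p6 : \sum_z expR (l * T z) + \sum_z expR (- l * T z) <= 2 * (2 ^+ M * E2) by lra.
rewrite mulrA mulrCA mulrA [2 ^+ M * 2]mulrC -mulrA.
by rewrite ler_wpM2l ?(ltW p2) // -mulrA.
Qed.
End B.

Section C.
Variable R : realType.

Lemma sq_sum N (F : 'I_N -> R) : (\sum_j F j) ^+ 2 = \sum_j \sum_k F j * F k.
Proof. by rewrite expr2 mulr_suml; apply: eq_bigr => j _; rewrite mulr_sumr. Qed.

Lemma ric_le m N s (A : 'M[R]_(m, N)) (d : R) : rip_set s A d -> ric s A <= d.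
Proof.
move=> h; apply: (ge_inf _ h).
exists 0 => x [hx _]; exact: hx.
Qed.

Lemma cs_sparse N s (x : 'cV[R]_N) : sparse s x ->
  (\sum_j `|x j ord0|) ^+ 2 <= s%:R * sqnorm x.
Proof.
move=> hs; set S := [set j | x j ord0 != 0].
have e : \sum_j `|x j ord0| = \sum_(j in S) `|x j ord0|.
  rewrite [RHS]big_mkcond /=; apply: eq_bigr => j _; rewrite inE.
  by case: eqP => // ->; rewrite normr0.
have e2 : sqnorm x = \sum_(j in S) (x j ord0) ^+ 2.
  rewrite /sqnorm [RHS]big_mkcond /=; apply: eq_bigr => j _; rewrite inE.
  by case: eqP => // ->; rewrite expr0n.
rewrite e e2 expr2 mulr_suml.
apply: (@le_trans _ _ (\sum_(j in S) \sum_(k in S) ((x j ord0)^+2 + (x k ord0)^+2) / 2)).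
  apply: ler_sum => j _; rewrite mulr_sumr; apply: ler_sum => k _.
  have := sqr_ge0 (`|x j ord0| - `|x k ord0|).
  rewrite -(real_normK (num_real (x j ord0))) -(real_normK (num_real (x k ord0))); lra.
have e3 : \sum_(j in S) \sum_(k in S) ((x j ord0)^+2 + (x k ord0)^+2) / 2
   = #|S|%:R * \sum_(j in S) (x j ord0) ^+ 2.
  under eq_bigr => j _ do rewrite -mulr_suml big_split /= sumr_const.
  rewrite -mulr_suml big_split /= sumr_const -sumrMnl.
  rewrite -mulr2n -[_ *+ 2]mulr_natr mulfK ?pnatr_eq0 //.
  by rewrite mulr_natl sumrMnl.
rewrite e3; apply: ler_wpM2r; last first.
  rewrite ler_nat; apply: leq_trans hs; rewrite leq_eqVlt; apply/orP; left; apply/eqP.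
  apply: eq_card => j; rewrite inE; apply/idP/idP => h.
    by apply/mem_set.
  by move/set_mem: h.
by apply: sumr_ge0 => j _; apply: sqr_ge0.
Qed.

Lemma rip_det (n N s : nat) (B : 'M[R]_(n, N)) (dl t : R) :
  (0 < n)%N -> (forall i j, B i j ^+ 2 = 1) -> 0 <= t -> 0 <= dl ->
  s%:R * t <= dl * n%:R ->
  (forall j k, j != k -> `|\sum_i B i j * B i k| <= t) ->
  ric s ((Num.sqrt n%:R)^-1 *: B) <= dl.
Proof.
move=> hn hB ht hd hst hG; apply: ric_le; split => // x hx.
set a := (Num.sqrt n%:R)^-1.
have nR : (0 : R) < n%:R by rewrite ltr0n.
have a2 : a ^+ 2 = (n%:R)^-1 by rewrite /a exprVn sqr_sqrtr // ltW.
pose y j := x j ord0.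
pose G j k := \sum_i B i j * B i k.
pose H j k := G j k - (j == k)%:R * n%:R.
have eA : sqnorm (a *: B *m x) = a ^+ 2 * \sum_j \sum_k y j * y k * G j k.
  rewrite /sqnorm.
  under eq_bigr => i _ do rewrite mxE sq_sum.
  rewrite mulr_sumr exchange_big /=; apply: eq_bigr => j _.
  rewrite mulr_sumr exchange_big /=; apply: eq_bigr => k _.
  rewrite /G mulr_sumr mulr_sumr; apply: eq_bigr => i _.
  rewrite !mxE /y; ring.
have ex : sqnorm x = a ^+ 2 * \sum_j \sum_k y j * y k * ((j == k)%:R * n%:R).
  rewrite a2 mulr_sumr /sqnorm; apply: eq_bigr => j _.
  rewrite (bigD1 j) //= big1 ?addr0; last first.
    by move=> k /negbTE hk; rewrite eq_sym hk mul0r mulr0.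
  by rewrite eqxx mul1r /y mulrC -!mulrA mulfV ?gt_eqF // mulr1 expr2.
have hH : forall j k, `|H j k| <= t.
  move=> j k; rewrite /H; case: (eqVneq j k) => [<-|hjk].
    rewrite mul1r /G (eq_bigr (fun _ => 1)); last by move=> i _; rewrite -expr2 hB.
    by rewrite sumr_const card_ord subrr normr0.
  by rewrite mul0r subr0; apply: hG.
have ed : sqnorm (a *: B *m x) - sqnorm x = a ^+ 2 * \sum_j \sum_k y j * y k * H j k.
  rewrite eA ex -mulrBr -sumrB; congr (_ * _); apply: eq_bigr => j _.
  by rewrite -sumrB; apply: eq_bigr => k _; rewrite /H mulrBr.
have bd : `|sqnorm (a *: B *m x) - sqnorm x| <= a ^+ 2 * t * (\sum_j `|y j|) ^+ 2.
  rewrite ed normrM ger0_norm ?sqr_ge0 // -mulrA ler_wpM2l ?sqr_ge0 //.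
  apply: (le_trans (ler_norm_sum _ _ _)).
  rewrite sq_sum mulr_sumr; apply: ler_sum => j _.
  apply: (le_trans (ler_norm_sum _ _ _)).
  rewrite mulr_sumr; apply: ler_sum => k _.
  rewrite !normrM [t * _]mulrC; apply: ler_wpM2l; last exact: hH.
  by rewrite mulr_ge0 ?normr_ge0.
have cs := cs_sparse hx.
have hsq : 0 <= sqnorm x by apply: sumr_ge0 => j _; apply: sqr_ge0.
have k1 : a ^+ 2 * t * (\sum_j `|y j|) ^+ 2 <= a ^+ 2 * t * (s%:R * sqnorm x).
  by rewrite ler_wpM2l // mulr_ge0 // a2 invr_ge0 ltW.
have k2 : a ^+ 2 * t * (s%:R * sqnorm x) <= dl * sqnorm x.
  rewrite mulrA; apply: ler_wpM2r => //.
  rewrite a2 -mulrA mulrC ler_pdivrMr // [t * _]mulrC; exact: hst.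
have := ler_norml (sqnorm (a *: B *m x) - sqnorm x) (dl * sqnorm x).
rewrite (le_trans bd (le_trans k1 k2)) => /esym /andP [h1 h2]; lra.
Qed.
End C.

Section D.
Variable R : realType.

Lemma card_cls (T : finType) (P : pred T) :
  #|[set b | P b]%classic| = #|[set b | P b]|.
Proof.
apply: eq_card => j; rewrite inE; apply/idP/idP => h.
  by move/set_mem: h.
by apply/mem_set.
Qed.

Lemma card_sum (T : finType) (P : pred T) :
  #|[set b | P b]|%:R = \sum_b (P b)%:R :> R.
Proof.
rewrite -sum1_card natr_sum big_mkcond /=; apply: eq_bigr => b _.
by rewrite inE; case: (P b).
Qed.

Lemma prob_generic (M n N s : nat) (B : {ffun 'I_M -> bool} -> 'M[R]_(n, N))
  (dl t eps X : R) :
  (0 < n)%N -> (forall b i j, B b i j ^+ 2 = 1) -> 0 <= t -> 0 <= dl ->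
  s%:R * t <= dl * n%:R -> 0 <= X ->
  (forall j k, j != k ->
     #|[set b | (t < `|\sum_i B b i j * B b i k|)%R]|%:R <= X) ->
  N%:R ^+ 2 * X <= eps * 2 ^+ M ->
  1 - eps <= prob R (fun b => ric s ((Num.sqrt n%:R)^-1 *: B b) <= dl).
Proof.
move=> hn hB ht hd hst hX hjk hNX.
rewrite /prob card_cls card_sum natrX.
have p2 : (0 : R) < 2 ^+ M by apply: exprn_gt0.
rewrite ler_pdivlMr //.
pose bad b := [exists j, exists k, (j != k) && (t < `|\sum_i B b i j * B b i k|)%R].
have h1 : forall b, 1 - (bad b)%:R <= ((ric s ((Num.sqrt n%:R)^-1 *: B b) <= dl)%R)%:R :> R.
  move=> b; case hb: (bad b); first by rewrite /= mulr1n subrr ler0n.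
  suff -> : (ric s ((Num.sqrt n%:R)^-1 *: B b) <= dl) = true by rewrite /= mulr0n subr0.
  apply: (rip_det (t:=t)) => // j k hjk'.
  rewrite leNgt; apply/negP => hlt; move/negbT: hb => /negP; apply.
  by apply/existsP; exists j; apply/existsP; exists k; rewrite hjk'.
have h2 : forall b, (bad b)%:R <=
    \sum_j \sum_k ((j != k) && (t < `|\sum_i B b i j * B b i k|)%R)%:R :> R.
  move=> b; case hb: (bad b); last by apply: sumr_ge0 => j _; apply: sumr_ge0.
  case/existsP: hb => j /existsP [k hk].
  rewrite (bigD1 j) //= (bigD1 k) //= hk -addrA lerDl.
  apply: addr_ge0; first by apply: sumr_ge0.
  by apply: sumr_ge0 => i _; apply: sumr_ge0.
have h3 : \sum_b (bad b)%:R <= N%:R ^+ 2 * X :> R.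
  apply: (le_trans (ler_sum _ (fun b _ => h2 b))).
  rewrite exchange_big /=.
  apply: (@le_trans _ _ (\sum_(j < N) \sum_(k < N) X)); last first.
    by rewrite !sumr_const card_ord expr2 -natrM mulr_natl mulrnA.
  apply: ler_sum => j _; rewrite exchange_big /=; apply: ler_sum => k _.
  case: (eqVneq j k) => [->|hjk'].
    by rewrite big1 // => b _; rewrite eqxx.
  apply: le_trans (hjk _ _ hjk'); rewrite card_sum.
  by apply: ler_sum => b _; rewrite /= lexx.
have h4 : \sum_(b : {ffun 'I_M -> bool}) (1 - (bad b)%:R) <=
  \sum_b ((ric s ((Num.sqrt n%:R)^-1 *: B b) <= dl)%R)%:R :> R.
  by apply: ler_sum => b _; apply: h1.
rewrite sumrB sumr_const card_ffun card_bool card_ord in h4.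
rewrite natrX in h4.
lra.
Qed.
End D.

Lemma mod2 (N a : nat) : (a < N + N)%N -> (a %% N = if (a < N) then a else a - N)%N.
Proof.
move=> h; case: ifP => h2; first by rewrite modn_small.
have -> : a = ((a - N) + N)%N by lia.
rewrite modnDr modn_small; lia.
Qed.
Lemma mod_inj (N j r1 r2 : nat) : (r1 < N)%N -> (r2 < N)%N -> (j < N)%N ->
  ((j + N - r1) %% N = (j + N - r2) %% N)%N -> r1 = r2.
Proof. move=> h1 h2 h3; rewrite !mod2; try lia; do 2 case: ifP; lia. Qed.
Lemma mod_wrap (N m d : nat) : (m < N)%N -> (d < N)%N -> (N <= m + d)%N ->
  ((m + d) %% N + (N - d) = m)%N.
Proof. move=> h1 h2 h3; rewrite mod2; try lia; case: ifP; lia. Qed.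

Definition cg (N : nat) (hN : (0 < N)%N) (j : nat) (r : 'I_N) : 'I_N :=
  Ordinal (ltn_pmod (j + N - r) hN).
Definition cA1 N (hN : (0 < N)%N) (Om : {set 'I_N}) (j k : nat) : {set 'I_N} :=
  [set cg hN j r | r in [set r in Om | ((j + N - r) %% N + (k - j) < N)%N]].
Definition cA2 N (hN : (0 < N)%N) (Om : {set 'I_N}) (j k : nat) : {set 'I_N} :=
  [set cg hN k r | r in [set r in Om | ~~ ((j + N - r) %% N + (k - j) < N)%N]].

Section E.
Variable R : realType.

Lemma circ_sum N (Om : {set 'I_N}) (b : {ffun 'I_N -> bool}) (j k : 'I_N) :
  \sum_i rowsubset Om (circulant R b) i j * rowsubset Om (circulant R b) i k =
  \sum_(r in Om) getp R b ((j + N - r) %% N)%N * getp R b ((k + N - r) %% N)%N.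
Proof. by rewrite [RHS]big_enum_val; apply: eq_bigr => i _; rewrite !mxE. Qed.

Lemma circ_split N (hN : (0 < N)%N) (Om : {set 'I_N}) (b : {ffun 'I_N -> bool})
  (j k : 'I_N) : (j < k)%N ->
  \sum_(r in Om) getp R b ((j + N - r) %% N)%N * getp R b ((k + N - r) %% N)%N =
  \sum_(m in cA1 hN Om j k) getp R b m * getp R b (m + (k - j)%N) +
  \sum_(m in cA2 hN Om j k) getp R b m * getp R b (m + (N - (k - j))%N).
Proof.
move=> hjk.
have hkN := ltn_ord k.
rewrite (bigID (fun r : 'I_N => ((j + N - r) %% N + (k - j) < N)%N)) /=.
congr (_ + _).
  rewrite /cA1 big_imset /=; last first.
    move=> r1 r2 _ _ /(congr1 val) /= e; apply: val_inj.
    exact: (mod_inj (ltn_ord r1) (ltn_ord r2) (ltn_ord j) e).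
  rewrite [RHS](eq_bigl (fun r => (r \in Om) && ((j + N - r) %% N + (k - j) < N)%N)); last first.
    by move=> r; rewrite inE.
  apply: eq_bigr => r /andP [_ hr]; congr (_ * _).
  have -> : (k + N - r = (j + N - r) + (k - j))%N by have := ltn_ord r; lia.
  by rewrite -modnDml modn_small.
rewrite /cA2 big_imset /=; last first.
  move=> r1 r2 _ _ /(congr1 val) /= e; apply: val_inj.
  exact: (mod_inj (ltn_ord r1) (ltn_ord r2) (ltn_ord k) e).
rewrite [RHS](eq_bigl (fun r => (r \in Om) && ~~ ((j + N - r) %% N + (k - j) < N)%N)); last first.
  by move=> r; rewrite inE.
apply: eq_bigr => r /andP [_ hr]; rewrite mulrC; congr (_ * _).
have -> : (k + N - r = (j + N - r) + (k - j))%N by have := ltn_ord r; lia.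
rewrite -modnDml mod_wrap //; first exact: ltn_pmod.
  lia.
rewrite leqNgt; exact: hr.
Qed.

Lemma exp_num (L : R) (M : nat) : 9/5 <= L ->
  2 * (2 ^+ M * (2 * expR (- (15/16 * L^+2)))) <= 2 ^+ M * (2 * expR (- L)).
Proof.
move=> hL.
have p : (0 : R) < 2 ^+ M by apply: exprn_gt0.
rewrite mulrCA ler_pM2l //.
have e : expR (- L) = expR (- (15/16 * L^+2)) * expR (15/16 * L^+2 - L).
  by rewrite -expRD; congr expR; lra.
have h1 : 1 <= 15/16 * L^+2 - L by nra.
have h2 := expR_ge1Dx (15/16 * L^+2 - L).
have h3 := expR_gt0 (- (15/16 * L^+2)).
rewrite e; nra.
Qed.

Lemma getp_sq M (y : {ffun 'I_M -> bool}) (m : nat) : (m < M)%N -> getp R y m ^+ 2 = 1.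
Proof.
move=> h; rewrite /getp; case: insubP => [k _ _|]; last by rewrite h.
by case: (y k); rewrite /pm1 ?sqrrN expr1n.
Qed.

Lemma sum_le_n n N (B : 'M[R]_(n, N)) (j k : 'I_N) : (forall i j, B i j ^+ 2 = 1) ->
  `|\sum_i B i j * B i k| <= n%:R.
Proof.
move=> hB; apply: (le_trans (ler_norm_sum _ _ _)).
have -> : n%:R = \sum_(i < n) (1 : R) by rewrite sumr_const card_ord.
apply: ler_sum => i _.
have : `|B i j * B i k| ^+ 2 == 1.
  by rewrite real_normK ?num_real // exprMn hB hB mulr1.
by rewrite sqrp_eq1 ?normr_ge0 // => /eqP ->.
Qed.

Lemma circ_entry N (Om : {set 'I_N}) (b : {ffun 'I_N -> bool}) i j :
  rowsubset Om (circulant R b) i j ^+ 2 = 1.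
Proof. rewrite !mxE; apply: getp_sq; apply: ltn_pmod; exact: (leq_ltn_trans (leq0n _) (ltn_ord j)). Qed.

Lemma circ_pair_lt N (Om : {set 'I_N}) (L : R) (j k : 'I_N) : (j < k)%N -> 9/5 <= L ->
  #|[set b : {ffun 'I_N -> bool} | (4 * Num.sqrt #|Om|%:R * L <
     `|\sum_i rowsubset Om (circulant R b) i j * rowsubset Om (circulant R b) i k|)%R]|%:R
  <= 2 ^+ N * (2 * expR (- L)).
Proof.
move=> hjk hL.
have hN : (0 < N)%N by exact: (leq_ltn_trans (leq0n _) (ltn_ord j)).
have p : (0 : R) < 2 ^+ N by apply: exprn_gt0.
have pe := expR_gt0 (- L).
set r := Num.sqrt #|Om|%:R.
have r0 : 0 <= r by apply: sqrtr_ge0.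
have rn : r ^+ 2 = #|Om|%:R by rewrite sqr_sqrtr.
case: (ltP (4 * L) r) => hr; last first.
  rewrite card_sum big1; first by apply: mulr_ge0; [exact: ltW | lra].
  move=> b _; case: ltP => //= h; exfalso.
  have := sum_le_n j k (fun i j => @circ_entry N Om b i j).
  have : r * r <= 4 * L * r by rewrite ler_wpM2r.
  rewrite -expr2 rn; lra.
set A1 := cA1 hN Om j k; set A2 := cA2 hN Om j k.
have t1 := @tail R N (k - j)%N A1 #|Om| L.
have t2 := @tail R N (N - (k - j))%N A2 #|Om| L.
have c1 : (#|A1| <= #|Om|)%N.
  apply: leq_trans (leq_imset_card _ _) _; apply: subset_leq_card.
  by apply/fintype.subsetP => x; rewrite inE => /andP [].
have c2 : (#|A2| <= #|Om|)%N.
  apply: leq_trans (leq_imset_card _ _) _; apply: subset_leq_card.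
  by apply/fintype.subsetP => x; rewrite inE => /andP [].
have hL0 : 0 < L by lra.
have d1 : (0 < k - j)%N by lia.
have d2 : (0 < N - (k - j))%N by have := ltn_ord k; lia.
have a1 : forall m, m \in A1 -> (m + (k - j) < N)%N.
  by move=> m /imsetP [x]; rewrite inE => /andP [_ h] ->.
have a2 : forall m, m \in A2 -> (m + (N - (k - j)) < N)%N.
  move=> m /imsetP [x]; rewrite inE => /andP [_ h] -> /=.
  have hx := ltn_ord x; have hk := ltn_ord k.
  have -> : ((k + N - x) %% N = ((j + N - x) %% N + (k - j)) %% N)%N.
    have -> : (k + N - x = (j + N - x) + (k - j))%N by lia.
    by rewrite -modnDml.
  have hm : ((j + N - x) %% N < N)%N by apply: ltn_pmod.
  move: h; rewrite -leqNgt => h.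
  rewrite mod_wrap //; lia.
move: (t1 d1 a1 c1 hL0 hr) (t2 d2 a2 c2 hL0 hr).
rewrite !card_sum => s1 s2.
apply: le_trans (exp_num N hL).
have e2 : forall x : R, 2 * x = x + x by move=> x; ring.
rewrite e2; apply: le_trans (lerD s1 s2).
rewrite -big_split /=; apply: ler_sum => b _.
rewrite circ_sum circ_split //.
case: ltP => //= h; last first.
  by rewrite addr_ge0 // ler0n.
set S1 := \sum_(m in A1) _; set S2 := \sum_(m in A2) _.
have := ler_normD S1 S2.
move: h; rewrite /r => h.
case: ltP => h1; case: ltP => h2 //=; rewrite ?mulr1n ?mulr0n; lra.
Qed.
End E.

Lemma tg_lt N (j r : 'I_N) : (j + N.-1 - r < (2 * N).-1)%N.
Proof. have := ltn_ord j; have := ltn_ord r; lia. Qed.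
Definition tg N (j r : 'I_N) : 'I_((2 * N).-1) := Ordinal (tg_lt j r).
Definition tA N (Om : {set 'I_N}) (j : 'I_N) : {set 'I_((2 * N).-1)} := [set tg j r | r in Om].

Section F.
Variable R : realType.

Lemma swap_pair M n N (B : {ffun 'I_M -> bool} -> 'M[R]_(n, N)) (t Y : R) :
  (forall j k : 'I_N, (j < k)%N ->
     #|[set b | (t < `|\sum_i B b i j * B b i k|)%R]|%:R <= Y) ->
  forall j k : 'I_N, j != k ->
     #|[set b | (t < `|\sum_i B b i j * B b i k|)%R]|%:R <= Y.
Proof.
move=> h j k hjk; case: (ltngtP j k) => hl; first exact: h.
  have -> : [set b | (t < `|\sum_i B b i j * B b i k|)%R] =
            [set b | (t < `|\sum_i B b i k * B b i j|)%R].
    apply/setP => b; rewrite !inE; congr (_ < `|_|).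
    by apply: eq_bigr => i _; rewrite mulrC.
  exact: h.
by move/val_inj: hl => hl; rewrite hl eqxx in hjk.
Qed.

Lemma toep_entry N (Om : {set 'I_N}) (c : {ffun 'I_(2 * N).-1 -> bool}) i j :
  rowsubset Om (toeplitz R c) i j ^+ 2 = 1.
Proof. rewrite !mxE; apply: getp_sq; exact: tg_lt. Qed.

Lemma toep_split N (Om : {set 'I_N}) (c : {ffun 'I_(2 * N).-1 -> bool}) (j k : 'I_N) :
  (j < k)%N ->
  \sum_i rowsubset Om (toeplitz R c) i j * rowsubset Om (toeplitz R c) i k =
  \sum_(m in tA Om j) getp R c m * getp R c (m + (k - j)%N).
Proof.
move=> hjk.
rewrite /tA big_imset /=; last first.
  move=> r1 r2 _ _ /(congr1 val) /= e; apply: val_inj.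
  change (nat_of_ord r1 = nat_of_ord r2).
  have := ltn_ord r1; have := ltn_ord r2; have := ltn_ord j; lia.
rewrite [RHS]big_enum_val; apply: eq_bigr => i _; rewrite !mxE; congr (_ * _).
have := ltn_ord k; have := ltn_ord (enum_val i); move=> h1 h2.
have key : forall r : nat, (r < N)%N -> (k + N.-1 - r = j + N.-1 - r + (k - j))%N.
  by move=> r hr; lia.
congr getp; apply: key; exact: ltn_ord.
Qed.

Lemma toep_pair_lt N (Om : {set 'I_N}) (L : R) (j k : 'I_N) : (j < k)%N -> 9/5 <= L ->
  #|[set c : {ffun 'I_(2 * N).-1 -> bool} | (4 * Num.sqrt #|Om|%:R * L <
     `|\sum_i rowsubset Om (toeplitz R c) i j * rowsubset Om (toeplitz R c) i k|)%R]|%:R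
  <= 2 ^+ (2 * N).-1 * (2 * expR (- L)).
Proof.
move=> hjk hL.
have p : (0 : R) < 2 ^+ (2 * N).-1 by apply: exprn_gt0.
have pe := expR_gt0 (- L).
set r := Num.sqrt #|Om|%:R.
have r0 : 0 <= r by apply: sqrtr_ge0.
have rn : r ^+ 2 = #|Om|%:R by rewrite sqr_sqrtr.
case: (ltP (4 * L) r) => hr; last first.
  rewrite card_sum big1; first by apply: mulr_ge0; [exact: ltW | lra].
  move=> b _; case: ltP => //= h; exfalso.
  have := sum_le_n j k (fun i j => @toep_entry N Om b i j).
  have : r * r <= 4 * L * r by rewrite ler_wpM2r.
  rewrite -expr2 rn; lra.
have hL0 : 0 < L by lra.
have d1 : (0 < k - j)%N by lia.
have c1 : (#|tA Om j| <= #|Om|)%N by apply: leq_imset_card.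
have a1 : forall m, m \in tA Om j -> (m + (k - j) < (2 * N).-1)%N.
  move=> m /imsetP [x _ ->] /=.
  have := ltn_ord x; have := ltn_ord k; lia.
have t1 := tail d1 a1 c1 hL0 hr.
have en := exp_num (2 * N).-1 hL.
have pe2 := expR_gt0 (- (15 / 16 * L ^+ 2)).
apply: le_trans en; apply: le_trans (_ : _ <= 2 ^+ (2 * N).-1 * (2 * expR (- (15 / 16 * L ^+ 2)))) _; last first.
  have : 0 <= 2 ^+ (2 * N).-1 * (2 * expR (- (15 / 16 * L ^+ 2))) by apply: mulr_ge0; [exact: ltW|lra].
  lra.
apply: le_trans t1; rewrite !card_sum; apply: ler_sum => b _.
rewrite toep_split //.
case: ltP => //= h.
move: h; rewrite /r => h.
have q : 0 <= Num.sqrt #|Om|%:R * L by apply: mulr_ge0; [exact: sqrtr_ge0 | lra].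
case: ltP => //= h2; rewrite ?mulr1n ?mulr0n; lra.
Qed.
End F.

Section G.
Variable R : realType.

Lemma prob_all M (P : pred {ffun 'I_M -> bool}) : (forall b, P b) -> prob R P = 1.
Proof.
move=> hP; rewrite /prob card_cls card_sum.
rewrite (eq_bigr (fun _ => 1)); last by move=> b _; rewrite hP.
rewrite sumr_const card_ffun card_bool card_ord divff // pnatr_eq0 expn_eq0 //.
Qed.

Lemma ric_zero m N s (A : 'M[R]_(m, N)) (dl : R) : m = 0%N -> 0 <= dl ->
  (forall x : 'cV[R]_N, sparse s x -> sqnorm x = 0) -> ric s A <= dl.
Proof.
move=> hm hd hz; subst m; apply: ric_le; split => // x hx.
have h0 : sqnorm (A *m x) = 0 by rewrite /sqnorm big_ord0.
by rewrite h0 (hz x hx) !mulr0.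
Qed.

Lemma sparse0 N (x : 'cV[R]_N) : sparse 0 x -> sqnorm x = 0.
Proof.
move=> hx; rewrite /sqnorm big1 // => j _.
move: hx; rewrite /sparse card_cls leqn0 cards_eq0 => /eqP hS.
have : j \notin [set j | x j ord0 != 0] by rewrite hS inE.
by rewrite inE negbK => /eqP ->; rewrite expr0n.
Qed.
End G.

Unset Implicit Arguments.
Theorem corollary4 (R : realType) (N n s : nat) (Om : {set 'I_N})
  (eps delta : R) :
  #|Om| = n -> 0 < eps -> eps < 1 -> 0 < delta ->
  16 * delta ^-2 * (s%:R) ^+ 2 * (ln (2 * (N%:R) ^+ 2 / eps)) ^+ 2 <= n%:R ->
  prob R (fun b : {ffun 'I_N -> bool} =>
          ric s ((Num.sqrt n%:R)^-1 *: rowsubset Om (circulant R b)) <= delta)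
    >= 1 - eps
  /\
  prob R (fun c : {ffun 'I_(2 * N).-1 -> bool} =>
          ric s ((Num.sqrt n%:R)^-1 *: rowsubset Om (toeplitz R c)) <= delta)
    >= 1 - eps.
Proof.
move=> hOm he0 he1 hd hyp; subst n.
set L := ln (2 * N%:R ^+ 2 / eps) in hyp *.
have hdi : 0 < delta ^-2 by rewrite invr_gt0 exprn_gt0.
case: (posnP #|Om|) => hn.
  have hz : forall x : 'cV[R]_N, sparse s x -> sqnorm x = 0.
    case: (posnP N) => hN.
      move=> x _; rewrite /sqnorm big1 // => i; have := ltn_ord i.
      by rewrite [X in (_ < X)%N -> _]hN.
    have N1 : (1 : R) <= N%:R by rewrite ler1n.
    have hL : 0 < L.
      apply: ln_gt0; rewrite ltr_pdivlMr //; nra.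
    case: s hyp => [|s'] hyp x hx; first exact: sparse0.
    exfalso; rewrite hn in hyp.
    have : 1 <= s'.+1%:R ^+ 2 :> R by rewrite exprn_ege1 // ler1n.
    have hL2 : 0 < L ^+ 2 by rewrite exprn_gt0.
    have : 0 < 16 * delta ^-2 * L ^+ 2 by rewrite !mulr_gt0.
    nra.
  split; rewrite prob_all; try lra; move=> b /=;
    (apply: ric_zero => //; [exact: ltW]).
have hN : (0 < N)%N by apply: leq_trans hn _; rewrite -[X in (_ <= X)%N]card_ord max_card.
have N1 : (1 : R) <= N%:R by rewrite ler1n.
have q0 : 0 < 2 * N%:R ^+ 2 / eps by rewrite divr_gt0 // mulr_gt0 // exprn_gt0 //; lra.
have hL0 : 0 <= L by apply: ln_ge0; rewrite ler_pdivlMr //; nra.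
set r := Num.sqrt #|Om|%:R.
have r0 : 0 < r by rewrite sqrtr_gt0 ltr0n.
have rn : r ^+ 2 = #|Om|%:R by rewrite sqr_sqrtr.
have hst : s%:R * (4 * r * L) <= delta * #|Om|%:R.
  have h1 : 16 * s%:R ^+ 2 * L ^+ 2 <= delta ^+ 2 * #|Om|%:R.
    have e : 16 * s%:R ^+ 2 * L ^+ 2 = (16 * delta ^-2 * s%:R ^+ 2 * L ^+ 2) * delta ^+ 2.
      by field; rewrite gt_eqF.
    rewrite e mulrC; apply: ler_wpM2l => //; exact: sqr_ge0.
  have h2 : (4 * s%:R * L) ^+ 2 <= (delta * r) ^+ 2.
    rewrite [(delta * r) ^+ 2]exprMn rn !exprMn; lra.
  have s0 : (0 : R) <= s%:R by apply: ler0n.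
  have h3 : 4 * s%:R * L <= delta * r.
    by rewrite -ler_sqr ?nnegrE ?mulr_ge0 //; lra.
  rewrite -rn expr2; nra.
have hX : forall M, N%:R ^+ 2 * (2 ^+ M * (2 * expR (- L))) <= eps * 2 ^+ M.
  move=> M; rewrite expRN /L lnK ?posrE //.
  rewrite le_eqVlt; apply/orP; left; apply/eqP; field.
  by rewrite gt_eqF //; lra.
have hL95 : forall j k : 'I_N, j != k -> 9/5 <= L.
  move=> j k hjk; apply: ln_ge95.
  have hN2 : (2 <= N)%N.
    have := ltn_ord j; have := ltn_ord k.
    have : (nat_of_ord j != nat_of_ord k) by [].
    lia.
  have N2 : (2%:R : R) <= N%:R by rewrite ler_nat.
  rewrite ler_pdivlMr //; nra.
have hX0 : forall M, 0 <= 2 ^+ M * (2 * expR (- L)) :> R.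
  by move=> M; apply: mulr_ge0; [apply: exprn_ge0 | apply: mulr_ge0; [lra | exact: ltW (expR_gt0 _)]].
have ht : 0 <= 4 * r * L by apply: mulr_ge0 => //; apply: mulr_ge0 => //; lra.
split.
  apply: (prob_generic (B := fun b => rowsubset Om (circulant R b))
            (t := 4 * r * L) (X := 2 ^+ N * (2 * expR (- L)))) => //.
  - by move=> b i j; exact: circ_entry.
  - exact: ltW.
  - apply: swap_pair => j k hjk; apply: circ_pair_lt => //.
    by apply: (hL95 j k); rewrite neq_ltn hjk.
apply: (prob_generic (B := fun b => rowsubset Om (toeplitz R b))
          (t := 4 * r * L) (X := 2 ^+ (2 * N).-1 * (2 * expR (- L)))) => //.
- by move=> b i j; exact: toep_entry.
- exact: ltW.
- apply: swap_pair => j k hjk; apply: toep_pair_lt => //.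
  by apply: (hL95 j k); rewrite neq_ltn hjk.
Qed.
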